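(* Let $V$ and $Q$ be real Hilbert spaces, $f \in V'$, $g \in Q'$, and let $a : V \times V \to \mathbb{R}$ and $b : V \times Q \to \mathbb{R}$ be bilinear forms with $|a(u,v)| \leq \|a\| \|u\|_V \|v\|_V$ and $|b(v,q)| \leq \|b\| \|v\|_V \|q\|_Q$ for all $u,v \in V$, $q \in Q$. Let $B : V \to Q'$ be defined by $\langle Bv, q\rangle_{Q' \times Q} = b(v,q)$ and let $K := \{ v \in V : b(v,q) = 0 \text{ for all } q \in Q\}$. Assume $\operatorname{Range} B = Q'$, and let $\beta > 0$ be a constant with $$\beta \leq \inf_{q \in Q\setminus\{0\}} \sup_{v \in V \setminus\{0\}} \frac{b(v,q)}{\|v\|_V \|q\|_Q}.$$ Assume moreover that $a$ is symmetric, $a(u,v) = a(v,u)$ for all $u,v \in V$, and coercive: there is $\alpha > 0$ with $a(u,u) \geq \alpha\|u\|_V^2$ for all $u \in V$; and let $\alpha_0 \geq \alpha$ be a constant with $a(u,u) \geq \alpha_0 \|u\|_V^2$ for all $u \in K$. Let $(u,p) \in V \times Q$ be the solution of $$a(u,v) + b(v,p) = \langle f, v\rangle_{V' \times V} \ \text{for all } v \in V, \qquad b(u,q) = \langle g, q \rangle_{Q' \times Q} \ \text{for all } q \in Q.$$ Then $$\|u\|_V \leq \frac{1}{\alpha_0}\|f\|_{K'} + \frac{1}{\beta}\Big(\frac{\|a\|}{\alpha}\Big)^{1/2}\|g\|_{Q'},$$ $$\|p\|_Q \leq \frac{1}{\beta}\|f \circ \Pi_{K_a^\perp}\|_{V'}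 + \frac{\|a\|}{\beta^2}\|g\|_{Q'} \leq \frac{1}{\beta}\Big(\frac{\|a\|}{\alpha}\Big)^{1/2}\|f\|_{(K_a^\perp)'} + \frac{\|a\|}{\beta^2}\|g\|_{Q'}.$$
   Context: For $f \in V'$, $\|f\|_{V'} := \sup_{v \in V\setminus\{0\}} |\langle f, v\rangle_{V'\times V}| / \|v\|_V$. For a closed subspace $U \subset V$, $\|f\|_{U'} := \sup_{v \in U \setminus\{0\}} |\langle f, v\rangle_{V' \times V}| / \|v\|_V$ (a semi norm on $V'$ in general). Since $a$ is a scalar product on $V$, define $K_a^\perp := \{ v \in V : a(v, w) = 0 \text{ for all } w \in K\}$; $\Pi_K : V \to K$ is the $a$-orthogonal projection onto $K$ (i.e. $a(\Pi_K v - v, w) = 0$ for all $v \in V$, $w \in K$), and $\Pi_{K_a^\perp} := I - \Pi_K$. $f \circ \Pi_{K_a^\perp} \in V'$ is the functional $v \mapsto \langle f, \Pi_{K_a^\perp} v\rangle_{V' \times V}$. $\|a\|$ denotes a continuity constant of $a$ as in the claim. *)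

(* Defs.v *)
From HB Require Import structures.
From mathcomp Require Import all_boot all_order all_algebra.
From mathcomp Require Import all_classical all_reals all_analysis.
Set Implicit Arguments. Unset Strict Implicit. Unset Printing Implicit Defensive.
Import Order.TTheory GRing.Theory Num.Theory.
Import numFieldNormedType.Exports.
Local Open Scope classical_set_scope.
Local Open Scope ring_scope.

Definition is_hilbert (R : realType) (V : completeNormedModType R) : Prop :=
  exists ip : V -> V -> R,
    (forall x y, ip x y = ip y x) /\
    (forall (r : R) x y z, ip (r *: x + y) z = r * ip x z + ip y z) /\
    (forall x, ip x x = `|x| ^+ 2).

Definition is_dual_elem (R : realType) (V : normedModType R) (f : V -> R) : Prop :=
  (forall (r : R) x y, f (r *: x + y) = r * f x + f y) /\ continuous f.

Definition is_bilinear (R : realType) (V W : normedModType R) (a : V -> W -> R) : Prop :=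
  (forall (r : R) x y z, a (r *: x + y) z = r * a x z + a y z) /\
  (forall (r : R) x y z, a z (r *: x + y) = r * a z x + a z y).

(* ||f||_{S'} := sup_{v in S \ {0}} |<f,v>| / ||v||  (the dual (semi)norm
   restricted to S; with S = setT this is ||f||_{V'}). *)
Definition dnorm (R : realType) (V : normedModType R) (S : set V) (f : V -> R) : R :=
  sup [set `|f v| / `|v| | v in S `&` [set v | v != 0]].

Definition kerB (R : realType) (V Q : normedModType R) (b : V -> Q -> R) : set V :=
  [set v | forall q, b v q = 0].

Definition a_perp (R : realType) (V : normedModType R) (a : V -> V -> R) (K : set V) : set V :=
  [set v | forall w, K w -> a v w = 0].

Definition is_a_proj (R : realType) (V : normedModType R) (a : V -> V -> R)
  (K : set V) (P : V -> V) : Prop :=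
  forall v, K (P v) /\ (forall w, K w -> a (P v - v) w = 0).

(* Main.v *)
Require Import Defs.
From HB Require Import structures.
From mathcomp Require Import all_boot all_order all_algebra.
From mathcomp Require Import all_classical all_reals all_analysis.
From mathcomp Require Import ring lra.
Import Order.TTheory GRing.Theory Num.Theory.
Import numFieldNormedType.Exports.
Local Open Scope classical_set_scope.
Local Open Scope ring_scope.

Section Lin.
Variables (R : realType) (V : normedModType R) (h : V -> R).
Hypothesis hl : forall (r : R) x y, h (r *: x + y) = r * h x + h y.
Lemma lin0 : h 0 = 0.
Proof. have := hl 1 0 0; rewrite scale1r addr0 mul1r; lra. Qed.
Lemma linD x y : h (x + y) = h x + h y.
Proof. by rewrite -[x in LHS]scale1r hl mul1r. Qed.
Lemma linZ r x : h (r *: x) = r * h x.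
Proof. by rewrite -[_ *: _]addr0 hl lin0 addr0. Qed.
Lemma linN x : h (- x) = - h x.
Proof. by rewrite -scaleN1r linZ mulN1r. Qed.
Lemma linB x y : h (x - y) = h x - h y.
Proof. by rewrite linD linN. Qed.
End Lin.
Arguments lin0 {R V h}. Arguments linD {R V h}. Arguments linZ {R V h}. Arguments linN {R V h}. Arguments linB {R V h}.

Lemma small_le0 (R : realType) (x K : R) : 0 <= K ->
  (forall e, 0 < e -> e <= 1 -> x <= K * e) -> x <= 0.
Proof.
move=> K0 H; rewrite leNgt; apply/negP => x0.
pose e := Num.min 1 (x / (K + 1)).
have K1 : 0 < K + 1 by lra.
have ey : e <= x / (K + 1) by rewrite /e ge_min lexx orbT.
have e1 : e <= 1 by rewrite /e ge_min lexx.
have e0 : 0 < e by rewrite /e lt_min ltr01 divr_gt0.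
have := H e e0 e1.
have : x / (K + 1) * (K + 1) = x by rewrite divfK // gt_eqF.
have y0 : 0 < x / (K + 1) by rewrite divr_gt0.
set y := x / (K + 1) => hy. have : K * e <= K * y by rewrite ler_wpM2l. nra.
Qed.

Lemma sup_le_ub (R : realType) (S : set R) (k : R) : 0 <= k ->
  (forall x, S x -> x <= k) -> sup S <= k.
Proof.
move=> k0 H; have [->|/set0P ne] := eqVneq S set0; first by rewrite sup0.
by apply: ge_sup => // x Sx; apply: H.
Qed.

Lemma le_sup (R : realType) (S : set R) (k x : R) :
  (forall y, S y -> y <= k) -> S x -> x <= sup S.
Proof. move=> H Sx; have hu : has_ubound S by exists k. exact: (ub_le_sup hu). Qed.
Definition epn (R : realType) (n : nat) : R := n.+1%:R^-1.
Lemma epn_gt0 (R : realType) n : 0 < epn R n.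
Proof. by rewrite /epn invr_gt0 ltr0Sn. Qed.
Lemma epn_anti (R : realType) n k : (n <= k)%N -> epn R k <= epn R n.
Proof. by move=> nk; rewrite /epn lef_pV2 ?posrE ?ltr0Sn // ler_nat ltnS. Qed.
Lemma ep_small (R : realType) (e : R) : 0 < e ->
  exists N : nat, forall n, (N <= n)%N -> epn R n < e.
Proof. rewrite /epn.
move=> e0; have [N _ HN] := nbhs_infty_gtr (e^-1).
exists N => n Nn; have := HN n Nn => /= h.
rewrite invf_plt ?posrE ?ltr0Sn //; apply: (lt_trans h).
by rewrite ltr_nat.
Qed.

Arguments ep_small {R e}. Arguments epn_anti {R n k}. Arguments epn_gt0 {R} n.

Section LM.
Variables (R : realType) (X : completeNormedModType R) (c : X -> X -> R) (phi : X -> R) (g M C : R).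
Hypotheses (cl : forall r x y z, c (r *: x + y) z = r * c x z + c y z)
 (cs : forall x y, c x y = c y x) (g0 : 0 < g) (cco : forall x, g * `|x| ^+ 2 <= c x x)
 (M0 : 0 <= M) (cb : forall x y, `|c x y| <= M * `|x| * `|y|)
 (phil : forall r x y, phi (r *: x + y) = r * phi x + phi y)
 (phib : forall x, `|phi x| <= C * `|x|).

Let cr r x y z : c z (r*:x+y) = r * c z x + c z y.
Proof. by rewrite !(cs z) cl. Qed.
Let cDl z x y : c (x + y) z = c x z + c y z := @linD _ _ (fun x => c x z) (fun r x y => cl r x y z) x y.
Let cZl z r x : c (r *: x) z = r * c x z := @linZ _ _ (fun x => c x z) (fun r x y => cl r x y z) r x.
Let cBl z x y : c (x - y) z = c x z - c y z := @linB _ _ (fun x => c x z) (fun r x y => cl r x y z) x y.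
Let cDr z x y : c z (x + y) = c z x + c z y := @linD _ _ (fun x => c z x) (fun r x y => cr r x y z) x y.
Let cZr z r x : c z (r *: x) = r * c z x := @linZ _ _ (fun x => c z x) (fun r x y => cr r x y z) r x.
Let cBr z x y : c z (x - y) = c z x - c z y := @linB _ _ (fun x => c z x) (fun r x y => cr r x y z) x y.
Let cNl z x : c (- x) z = - c x z := @linN _ _ (fun x => c x z) (fun r x y => cl r x y z) x.
Let cNr z x : c z (- x) = - c z x := @linN _ _ (fun x => c z x) (fun r x y => cr r x y z) x.
Let pD := linD phil.
Let pZ := linZ phil.
Let pB := linB phil.

Let E x := c x x / 2 - phi x.

Let E_expand x t v : E (x + t *: v) = E x + t * (c x v - phi v) + t^+2 * c v v / 2.
Proof.
rewrite /E !(cDl, cDr, cZl, cZr, pD, pZ) (cs v x); field; done.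
Qed.

Let E_mid x y : E x + E y - 2 * E (2^-1 *: (x + y)) = c (x - y) (x - y) / 4.
Proof.
rewrite /E !(cDl, cDr, cZl, cZr, cBl, cBr, cNl, cNr, pD, pZ) (cs y x); field; done.
Qed.

Let E_lb x : - E x <= C^+2 / (2 * g).
Proof.
rewrite ler_pdivlMr ?mulr_gt0 // /E.
have := cco x; have := phib x; have := ler_norm (phi x).
set t := `|x|; set p := phi x; set q := `|phi x|; set k := c x x => h1 h2 h3.
have : 2 * g * p <= 2 * g * (C * t) by rewrite ler_pM2l ?mulr_gt0 //; lra.
have : g * (g * t^+2) <= g * k by rewrite ler_pM2l.
have : 0 <= (C - g * t)^+2 by apply: sqr_ge0.
nra.
Qed.

Lemma LM_exists : exists z, forall v, c z v = phi v.
Proof.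
pose S := [set - E x | x in [set: X]].
have hS : has_sup S.
  split; first by exists (- E 0); exists 0.
  by exists (C^+2/(2*g)) => _ [x _ <-]; exact: E_lb.
pose s : R := sup S.
have Emin y : - s <= E y.
  have := @sup_upper_bound _ S hS (- E y) (ex_intro2 _ _ y I erefl). rewrite -/s. move=> h; lra.
have : forall n : nat, exists x, s - epn R n < - E x.
  move=> n; have e0 := (@epn_gt0 R n).
  have [_ [x _ <-] H] := @sup_adherent _ S _ e0 hS.
  by exists x.
move/choice => [xs Hxs].
clearbody s.
have Hx n : E (xs n) < - s + epn R n.
  have := Hxs n => /= h; lra.
have Hc n k : g * `|xs n - xs k|^+2 <= 4 * (epn R n + epn R k).
  have := E_mid (xs n) (xs k); have := Emin (2^-1 *: (xs n + xs k)).
  have := cco (xs n - xs k); have := Hx n; have := Hx k; move=> h1 h2 h3 h4 h5; lra.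
have cau : cauchy (xs @ \oo).
  apply: cauchy_exP => e e0.
  have e' : 0 < g * e^+2 / 16 by rewrite divr_gt0 // mulr_gt0 // exprn_gt0.
  have [N HN] := ep_small e'.
  exists (xs N); exists N => // n /= Nn.
  rewrite -ball_normE /ball_ /=.
  have h1 := Hc N n; have h2 := (@epn_anti R _ _ Nn); have h3 := HN N (leqnn N).
  have h4 : g * `|xs N - xs n| ^+ 2 < g * e ^+ 2.
    have := (@epn_gt0 R n). have : 0 < g * e^+2 by rewrite mulr_gt0 // exprn_gt0. nra.
  rewrite ltr_pM2l // in h4.
  have d0 := normr_ge0 (xs N - xs n).
  rewrite ltNge; apply/negP => H; nra.
have Hz : xs @ \oo --> lim (xs @ \oo) := cauchy_cvg (xs @ \oo) cau.
set z := lim (xs @ \oo) in Hz *.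
have {}Hz : xs @ \oo --> z by apply: Hz.
exists z => v.
have Hv n : (c (xs n) v - phi v)^+2 <= 2 * epn R n * (M * `|v|^+2).
  have [->|v0] := eqVneq v 0.
    rewrite (@lin0 _ _ (fun x => c (xs n) x) (fun r x y => cr r x y (xs n))) (lin0 phil) subrr.
    by rewrite expr0n /= normr0 expr0n /= !mulr0.
  set D := c (xs n) v - phi v; set ep := epn R n.
  have ep0 : 0 < ep by exact: (@epn_gt0 R n).
  have cvv : 0 < c v v.
    apply: lt_le_trans (cco v); rewrite mulr_gt0 // exprn_gt0 // normr_gt0 //.
  have cvM : c v v <= M * `|v|^+2.
    by have := cb v v; rewrite expr2 mulrA; apply: le_trans; apply: ler_norm.
  have := E_expand (xs n) (- D / c v v) v; have := Emin (xs n + (- D / c v v) *: v).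
  have := Hx n; rewrite -/ep => h1 h2 h3.
  have h4 : (- D / c v v) * D + (- D / c v v) ^+ 2 * c v v / 2 = - (D^+2 / c v v) / 2.
    by field; rewrite gt_eqF.
  rewrite -addrA h4 in h3.
  have h5 : D^+2 / c v v < 2 * ep.
    move: h1 h2 h3; move: (D^+2 / c v v) (E (xs n)) (E (xs n + (- D / c v v) *: v)) => a b d.
    lra.
  rewrite ltr_pdivrMr // in h5.
  have : 2 * ep * c v v <= 2 * ep * (M * `|v|^+2) by rewrite ler_pM2l ?mulr_gt0.
  lra.
apply/eqP; rewrite -subr_eq0 -sqrf_eq0 eq_le sqr_ge0 andbT.
apply: (@small_le0 _ _ (4 * M * `|v|^+2 + 2 * M^+2 * `|v|^+2)).
  by rewrite addr_ge0 // !mulr_ge0.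
move=> e e0 e1.
have := @cvgr_dist_lt _ _ _ _ _ xs z Hz e e0 => -[N1 _ HN1].
have [N2 HN2] := ep_small e0.
set n := maxn N1 N2.
have h1 : `|z - xs n| < e by apply: HN1; rewrite /= leq_maxl.
have h2 : epn R n < e by apply: HN2; rewrite leq_maxr.
have h3 := Hv n.
have h4 : c z v - phi v = (c (xs n) v - phi v) + c (z - xs n) v by rewrite cBl; ring.
have h5 := cb (z - xs n) v.
rewrite h4.
set D := c (xs n) v - phi v; set w := c (z - xs n) v.
set a := `|z - xs n|; set b := `|v|.
have a0 : 0 <= a by apply: normr_ge0.
have b0 : 0 <= b by apply: normr_ge0.
have h6 : w ^+ 2 <= (M * a * b)^+2.
  rewrite -real_normK ?num_real //.
  have := normr_ge0 w; move: (`|w|) h5 => W hW W0.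
  have : 0 <= M * a * b by rewrite !mulr_ge0.
  move: (M * a * b) hW => K hW K0; nra.
have h7 : a ^+ 2 <= e.
  have ha : a < e := h1.
  have : a <= 1 by exact: le_trans (ltW ha) e1.
  nra.
have h8 : epn R n * (M * b ^+ 2) <= e * (M * b ^+ 2).
  by rewrite ler_wpM2r ?mulr_ge0 ?sqr_ge0 // ltW.
have h9 : M^+2 * b^+2 * a^+2 <= M^+2 * b^+2 * e.
  by rewrite ler_wpM2l // mulr_ge0 // sqr_ge0.
have h10 : (M * a * b)^+2 = M^+2 * b^+2 * a^+2 by ring.
have : (D + w)^+2 <= 2 * D^+2 + 2 * w^+2.
  have := sqr_ge0 (D - w). nra.
rewrite h10 in h6.
have h11 : (4 * M * b ^+ 2 + 2 * M ^+ 2 * b ^+ 2) * e = 2 * (2 * (e * (M * b ^+ 2))) + 2 * (M ^+ 2 * b ^+ 2 * e) by ring.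
rewrite h11.
have h12 : 2 * epn R n * (M * b ^+ 2) = 2 * (epn R n * (M * b ^+ 2)) by ring.
rewrite h12 in h3.
move: h3 h6 h8 h9; move: (epn R n * (M * b ^+ 2)) (e * (M * b ^+ 2)) (M ^+ 2 * b ^+ 2 * e) (M ^+ 2 * b ^+ 2 * a ^+ 2) (D^+2) (w^+2) ((D + w)^+2) => x1 x2 x3 x4 x5 x6 x7.
lra.
Qed.
End LM.

Section DN.
Variables (R : realType) (V : normedModType R).
Implicit Types (S : set V) (h : V -> R).

Lemma dnorm_at S h Ch v : (forall x, `|h x| <= Ch * `|x|) -> S v ->
  `|h v| <= dnorm S h * `|v|.
Proof.
move=> hb Sv; have [->|v0] := eqVneq v 0.
  by have := hb 0; rewrite normr0 !mulr0.
have nv : 0 < `|v| by rewrite normr_gt0.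
rewrite -ler_pdivrMr //; apply: (@le_sup _ _ Ch).
  move=> _ [x [_ /= x0] <-]; rewrite ler_pdivrMr ?normr_gt0 //.
by exists v.
Qed.

Lemma dnorm_ge0 S h Ch : (forall x, `|h x| <= Ch * `|x|) -> 0 <= dnorm S h.
Proof.
move=> hb; have [[v [Sv v0]]|nE] := pselect (exists v, S v /\ v != 0).
  apply: le_trans (_ : `|h v| / `|v| <= _); first by rewrite divr_ge0.
  apply: (@le_sup _ _ Ch); last by exists v.
  move=> _ [x [_ /= x0] <-]; rewrite ler_pdivrMr ?normr_gt0 //.
rewrite /dnorm; have -> : [set `|h v| / `|v| | v in S `&` [set v | v != 0]] = set0.
  by apply/seteqP; split=> // _ [v [Sv /= v0] _]; apply: nE; exists v.
by rewrite sup0.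
Qed.

Lemma dnorm_le S h k : 0 <= k ->
  (forall v, S v -> v != 0 -> `|h v| <= k * `|v|) -> dnorm S h <= k.
Proof.
move=> k0 H; apply: sup_le_ub => // _ [v [Sv /= v0] <-].
by rewrite ler_pdivrMr ?normr_gt0 // H.
Qed.

Lemma dnorm_triv S h : (forall v : V, v = 0) -> dnorm S h = 0.
Proof.
move=> triv; rewrite /dnorm.
have -> : [set `|h v| / `|v| | v in S `&` [set v | v != 0]] = set0.
  by apply/seteqP; split=> // _ [v [Sv /= v0] _]; rewrite (triv v) eqxx in v0.
by rewrite sup0.
Qed.
End DN.
Arguments dnorm_at {R V S h Ch v}. Arguments dnorm_ge0 {R V} S {h Ch}. Arguments dnorm_le {R V S h k}.

Lemma infsup_use (R : realType) (V Q : normedModType R) (b : V -> Q -> R) (beta k : R) (q : Q) :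
  q != 0 -> 0 <= k -> (forall v : V, v != 0 -> b v q <= k * `|v|) ->
  beta <= sup [set b v q / (`|v| * `|q|) | v in [set v : V | v != 0]] ->
  beta * `|q| <= k.
Proof.
move=> q0 k0 H hs; have nq : 0 < `|q| by rewrite normr_gt0.
rewrite -ler_pdivlMr //; apply: (le_trans hs); apply: sup_le_ub.
  by rewrite divr_ge0.
move=> _ [v /= v0 <-]; have nv : 0 < `|v| by rewrite normr_gt0.
rewrite ler_pdivrMr ?mulr_gt0 //.
have -> : k / `|q| * (`|v| * `|q|) = k * `|v| by field; rewrite gt_eqF.
exact: H.
Qed.

Theorem theorem2p4 (R : realType) (V Q : completeNormedModType R)
  (f : V -> R) (g : Q -> R) (a : V -> V -> R) (b : V -> Q -> R)
  (na nb alpha alpha0 beta : R) (u : V) (p : Q) (P : V -> V) :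
  is_hilbert V -> is_hilbert Q ->
  is_dual_elem f -> is_dual_elem g ->
  is_bilinear a -> is_bilinear b ->
  (forall x y, `|a x y| <= na * `|x| * `|y|) ->
  (forall v q, `|b v q| <= nb * `|v| * `|q|) ->
  (* Range B = Q' *)
  (forall h : Q -> R, is_dual_elem h -> exists v, forall q, b v q = h q) ->
  0 < beta ->
  (* beta <= inf_{q <> 0} sup_{v <> 0} b(v,q) / (||v|| ||q||) *)
  (forall q : Q, q != 0 ->
     beta <= sup [set b v q / (`|v| * `|q|) | v in [set v : V | v != 0]]) ->
  (forall x y, a x y = a y x) ->
  0 < alpha -> (forall x, alpha * `|x| ^+ 2 <= a x x) ->
  alpha <= alpha0 -> (forall x, kerB b x -> alpha0 * `|x| ^+ 2 <= a x x) ->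
  (forall v, a u v + b v p = f v) ->
  (forall q, b u q = g q) ->
  is_a_proj a (kerB b) P ->
  [/\ `|u| <= alpha0^-1 * dnorm (kerB b) f
              + beta^-1 * Num.sqrt (na / alpha) * dnorm setT g,
      `|p| <= beta^-1 * dnorm setT (fun v => f (v - P v))
              + na / beta ^+ 2 * dnorm setT g
    & beta^-1 * dnorm setT (fun v => f (v - P v)) + na / beta ^+ 2 * dnorm setT g
      <= beta^-1 * Num.sqrt (na / alpha) * dnorm (a_perp a (kerB b)) f
         + na / beta ^+ 2 * dnorm setT g].
Proof.
move=> _ _ [fl _] [gl _] [al ar] [bl br] ab bb _ b0 infsup asym a0 acoer aa0 acoerK eq1 eq2 Pproj.
have aDl x y z : a (x + y) z = a x z + a y z by exact: (@linD _ _ (fun x => a x z) (fun r x y => al r x y z)).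
have aBl x y z : a (x - y) z = a x z - a y z by exact: (@linB _ _ (fun x => a x z) (fun r x y => al r x y z)).
have aZl r x z : a (r *: x) z = r * a x z by exact: (@linZ _ _ (fun x => a x z) (fun r x y => al r x y z)).
have a0l z : a 0 z = 0 by exact: (@lin0 _ _ (fun x => a x z) (fun r x y => al r x y z)).
have aDr x y z : a z (x + y) = a z x + a z y by exact: (@linD _ _ (fun x => a z x) (fun r x y => ar r x y z)).
have aBr x y z : a z (x - y) = a z x - a z y by exact: (@linB _ _ (fun x => a z x) (fun r x y => ar r x y z)).
have aZr r x z : a z (r *: x) = r * a z x by exact: (@linZ _ _ (fun x => a z x) (fun r x y => ar r x y z)).
have bDl x y z : b (x + y) z = b x z + b y z by exact: (@linD _ _ (fun x => b x z) (fun r x y => bl r x y z)).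
have bBl x y z : b (x - y) z = b x z - b y z by exact: (@linB _ _ (fun x => b x z) (fun r x y => bl r x y z)).
have bZl r x z : b (r *: x) z = r * b x z by exact: (@linZ _ _ (fun x => b x z) (fun r x y => bl r x y z)).
have bDr x y z : b z (x + y) = b z x + b z y by exact: (@linD _ _ (fun x => b z x) (fun r x y => br r x y z)).
have bZr r x z : b z (r *: x) = r * b z x by exact: (@linZ _ _ (fun x => b z x) (fun r x y => br r x y z)).
have fB x y : f (x - y) = f x - f y by exact: (@linB _ _ f fl).
have fD x y : f (x + y) = f x + f y by exact: (@linD _ _ f fl).
have bb' v q : `|b v q| <= `|nb| * `|v| * `|q|.
  apply: (le_trans (bb v q)); rewrite -!mulrA ler_wpM2r ?mulr_ge0 //; exact: ler_norm.
have [[x0 x0ne]|triv] := pselect (exists x : V, x != 0); last first.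
  have trivV : forall x : V, x = 0.
    by move=> x; apply/eqP; apply/negP => /negP h; apply: triv; exists x.
  have trivQ : forall q : Q, q = 0.
    move=> q; apply/eqP; apply/negP => /negP q0.
    have := infsup q q0.
    have -> : [set b v q / (`|v| * `|q|) | v in [set v : V | v != 0]] = set0.
      by apply/seteqP; split=> // _ [v /= v0 _]; rewrite (trivV v) eqxx in v0.
    by rewrite sup0; apply/negP; rewrite -ltNge.
  rewrite !dnorm_triv // (trivV u) (trivQ p) normr0 !mulr0 !addr0.
  by split; rewrite ?normr0 ?mulr0 ?addr0.

have nx0 : 0 < `|x0| by rewrite normr_gt0.
have na_pos : 0 < na.
  have h1 := acoer x0; have h2 := ab x0 x0; have h3 := ler_norm (a x0 x0).
  have : alpha * `|x0| ^+ 2 <= na * `|x0| ^+ 2 by rewrite expr2; lra.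
  rewrite ler_pM2r ?exprn_gt0 // => h; lra.
have na0 : 0 <= na by lra.
have aself x : 0 <= a x x.
  by apply: le_trans (acoer x); rewrite mulr_ge0 ?sqr_ge0 // ltW.
have aselfle x : a x x <= na * `|x| ^+ 2.
  by have := ab x x; rewrite expr2 mulrA; apply: le_trans; apply: ler_norm.
have uniq0 y : a y y = 0 -> y = 0.
  move=> h; have := acoer y; rewrite h => h'.
  apply/eqP; rewrite -normr_eq0 -sqrf_eq0 eq_le sqr_ge0 andbT.
  by rewrite -(pmulr_rle0 _ a0).
have aCS x y : a x y ^+ 2 <= a x x * a y y.
  have [->|y0] := eqVneq y 0.
    by rewrite !(a0l, (fun x => asym x 0)) expr0n /= mulr0.
  have cy : 0 < a y y.
    apply: lt_le_trans (acoer y); rewrite mulr_gt0 // exprn_gt0 // normr_gt0 //.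
  have := aself (x + (- (a x y / a y y)) *: y).
  rewrite !(aDl, aDr, aZl, aZr) (asym y x).
  set t := a x y / a y y.
  have ht : t * a y y = a x y by rewrite /t divfK // gt_eqF.
  move=> h.
  have : 0 <= a x x - t * a x y by nra.
  rewrite -ht => h2.
  have h3 := mulr_ge0 h2 (ltW cy).
  nra.
have PK v : kerB b (P v) by case: (Pproj v).
have Pperp v k : kerB b k -> a (v - P v) k = 0.
  move=> Kk; case: (Pproj v) => _ /(_ k Kk).
  by rewrite -opprB -scaleN1r aZl mulN1r => /eqP; rewrite oppr_eq0 => /eqP.
have Porth v x : a (P x) (v - P v) = 0 by rewrite asym Pperp.
have Pself v : a (v - P v) (v - P v) <= a v v.
  have e : P v + (v - P v) = v by rewrite addrC subrK.
  have E1 := aDl (P v) (v - P v) v; rewrite e in E1.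
  have E2 := aDr (P v) (v - P v) (P v); rewrite e in E2.
  have E3 := aDr (P v) (v - P v) (v - P v); rewrite e in E3.
  have := Porth v v; have := Pperp v (P v) (PK v); have := aself (P v).
  lra.
have Pnorm v : `|v - P v| ^+ 2 <= (na / alpha) * `|v| ^+ 2.
  rewrite mulrAC ler_pdivlMr // mulrC.
  have := acoer (v - P v); have := Pself v; have := aselfle v; lra.
set sq := Num.sqrt (na / alpha).
have sq0 : 0 <= sq by apply: sqrtr_ge0.
have sqK : sq ^+ 2 = na / alpha by rewrite sqr_sqrtr // divr_ge0 // ltW.
have Pnorm' v : `|v - P v| <= sq * `|v|.
  have := Pnorm v; rewrite -sqK -exprMn => h.
  have := normr_ge0 (v - P v); have : 0 <= sq * `|v| by rewrite mulr_ge0.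
  move: h; move: (`|v - P v|) (sq * `|v|) => x y; nra.
set Cf := `|na| * `|u| + `|nb| * `|p|.
have fbound v : `|f v| <= Cf * `|v|.
  rewrite -eq1; apply: (le_trans (ler_normD _ _)).
  have h1 := ab u v; have h2 := bb' v p.
  have : na * `|u| * `|v| <= `|na| * `|u| * `|v|.
    by rewrite -!mulrA ler_wpM2r ?mulr_ge0 // ler_norm.
  rewrite /Cf mulrDl; nra.
have Cf0 : 0 <= Cf by rewrite /Cf addr_ge0 // mulr_ge0.
have : forall q, exists z, forall v, a z v = b v q.
  move=> q; apply: (@LM_exists R V a (fun v => b v q) alpha na (`|nb| * `|q|)) => //.
  - by move=> x; have := bb' x q; rewrite mulrAC.
move/choice => [zq Hzq].
have uniqa x y : (forall v, a x v = a y v) -> x = y.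
  move=> h; apply/eqP; rewrite -subr_eq0; apply/eqP; apply: uniq0.
  by rewrite aBl h subrr.
have zqlin r x y : zq (r *: x + y) = r *: zq x + zq y.
  by apply: uniqa => v; rewrite Hzq aDl aZl !Hzq bDr bZr.
set d := fun q1 q2 => b (zq q1) q2.
have dco q : beta ^+ 2 / na * `|q| ^+ 2 <= d q q.
  rewrite /d -Hzq mulrAC ler_pdivrMr //.
  have [->|q0] := eqVneq q 0.
    by rewrite normr0 expr0n /= !(mulr0, mul0r) mulr_ge0.
  set A := a (zq q) (zq q).
  have A0 : 0 <= A by apply: aself.
  have := @infsup_use R V Q b beta (Num.sqrt (A * na)) q q0 (sqrtr_ge0 _) _ (infsup q q0).
  have hsq : Num.sqrt (A * na) ^+ 2 = A * na by rewrite sqr_sqrtr // mulr_ge0.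
  have sA : 0 <= Num.sqrt (A * na) by apply: sqrtr_ge0.
  have H : forall v : V, v != 0 -> b v q <= Num.sqrt (A * na) * `|v|.
    move=> v _; rewrite -Hzq.
    have h1 := aCS (zq q) v; have h2 := aselfle v.
    have h3 : a (zq q) v ^+ 2 <= (Num.sqrt (A * na) * `|v|) ^+ 2.
      rewrite exprMn hsq; apply: (le_trans h1); rewrite -mulrA ler_wpM2l //.
    have := normr_ge0 v; have : 0 <= Num.sqrt (A * na) * `|v| by rewrite mulr_ge0.
    move: h3; move: (a (zq q) v) (Num.sqrt (A * na) * `|v|) => x y; nra.
  move=> /(_ H) h.
  have hb : 0 <= beta * `|q| by rewrite mulr_ge0 // ltW.
  rewrite -exprMn -hsq.
  move: h hb sA; move: (Num.sqrt (A * na)) (beta * `|q|) => s' y h1 h2 h3.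
  nra.

have nzq x : alpha * `|zq x| <= `|nb| * `|x|.
  have h1 := acoer (zq x); rewrite Hzq in h1.
  have h2 := bb' (zq x) x; have h3 := ler_norm (b (zq x) x).
  have := normr_ge0 (zq x); have := normr_ge0 x.
  move: h1 h2 h3; move: (`|zq x|) (`|x|) (b (zq x) x) (`|b (zq x) x|) => z0 x1 B AB h1 h2 h3 hx hz.
  have hnb : 0 <= `|nb| by [].
  have [->|zp] := eqVneq z0 0; first by rewrite mulr0 mulr_ge0.
  have zp' : 0 < z0 by rewrite lt_neqAle eq_sym zp hz.
  have : alpha * z0 * z0 <= `|nb| * x1 * z0 by nra.
  by rewrite ler_pM2r.
have : exists q0, forall q', d q0 q' = g q'.
  apply: (@LM_exists R Q d g (beta ^+ 2 / na) (nb ^+ 2 / alpha) (`|nb| * `|u|)).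
  - by move=> r x y z; rewrite /d zqlin bDl bZl.
  - by move=> x y; rewrite /d -!Hzq asym.
  - by rewrite divr_gt0 // exprn_gt0.
  - exact: dco.
  - by rewrite divr_ge0 ?sqr_ge0 // ltW.
  - move=> x y; rewrite /d.
    apply: (le_trans (bb' _ _)).
    have := nzq x; have := normr_ge0 y; have := normr_ge0 (zq x).
    have : nb ^+ 2 = `|nb| ^+ 2 by rewrite real_normK // num_real.
    move=> ->; have := normr_ge0 nb.
    move: (`|nb|) (`|zq x|) (`|x|) (`|y|) => N z x1 y1 hN hz hy hzx.
    have hz' : z <= N * x1 / alpha by rewrite ler_pdivlMr // mulrC.
    have -> : N ^+ 2 / alpha * x1 * y1 = N * (N * x1 / alpha) * y1.
      by field; rewrite gt_eqF.
    by rewrite ler_wpM2r // ler_wpM2l.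
  - exact: gl.
  - by move=> x; rewrite -eq2; apply: bb'.
move=> [q0 Hq0].
set w := u - P u.
have wz : zq q0 = w.
  apply/eqP; rewrite -subr_eq0; apply/eqP; apply: uniq0.
  have Ky : kerB b (zq q0 - w).
    move=> q'; rewrite bBl /w bBl (PK u q') subr0 eq2; have := Hq0 q'; rewrite /d => ->.
    by rewrite subrr.
  have := Pperp u (zq q0 - w) Ky; rewrite -/w => hw.
  by rewrite aBl Hzq (Ky q0) hw subrr.
have Hw v : a w v = b v q0 by rewrite -wz Hzq.

have gbound q : `|g q| <= (`|nb| * `|u|) * `|q| by rewrite -eq2; apply: bb'.
set G := dnorm setT g.
have G0 : 0 <= G := dnorm_ge0 setT gbound.
have gG q : `|g q| <= G * `|q| := dnorm_at gbound (I : setT q).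
set X := a w w.
have X0 : 0 <= X by apply: aself.
have Xg : X = g q0.
  by rewrite /X Hw /w bBl (PK u q0) subr0 eq2.
have Xq : beta ^+ 2 * `|q0| ^+ 2 <= na * X.
  have := dco q0; rewrite /d -Hzq wz -/X mulrAC ler_pdivrMr // mulrC => h; lra.
have XB : X * beta ^+ 2 <= na * G ^+ 2.
  have h1 : X <= G * `|q0| by rewrite Xg; apply: le_trans (ler_norm _) (gG q0).
  have hq := normr_ge0 q0.
  have [X0'|Xp] := eqVneq X 0.
    by rewrite X0' mul0r mulr_ge0 // sqr_ge0.
  have Xp' : 0 < X by rewrite lt_neqAle eq_sym Xp X0.
  have h2 : X ^+ 2 <= G ^+ 2 * `|q0| ^+ 2.
    rewrite -exprMn; move: h1 X0; move: (G * `|q0|) => y h1 h0; nra.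
  have h3 : X ^+ 2 * beta ^+ 2 <= G ^+ 2 * (na * X).
    apply: le_trans (_ : G ^+ 2 * `|q0| ^+ 2 * beta ^+ 2 <= _).
      by rewrite ler_wpM2r // sqr_ge0.
    by rewrite -mulrA ler_wpM2l ?sqr_ge0 // mulrC.
  have : X * (X * beta ^+ 2) <= X * (na * G ^+ 2).
    have -> : X * (X * beta ^+ 2) = X ^+ 2 * beta ^+ 2 by ring.
    have -> : X * (na * G ^+ 2) = G ^+ 2 * (na * X) by ring.
    exact: h3.
  by rewrite ler_pM2l.
have wB : `|w| ^+ 2 <= (beta^-1 * sq * G) ^+ 2.
  rewrite !exprMn sqK.
  have -> : beta^-1 ^+ 2 * (na / alpha) * G ^+ 2 = na * G ^+ 2 / (beta ^+ 2 * alpha).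
    by field; rewrite ?gt_eqF.
  rewrite ler_pdivlMr ?mulr_gt0 ?exprn_gt0 //.
  have := acoer w; rewrite -/X => h.
  have h' : `|w| ^+ 2 * alpha * beta ^+ 2 <= X * beta ^+ 2 by rewrite ler_wpM2r ?sqr_ge0 // mulrC.
  rewrite mulrA; apply: le_trans XB; rewrite mulrAC; exact: h'.
have Fk0 : 0 <= dnorm (kerB b) f := dnorm_ge0 (kerB b) fbound.
set Fk := dnorm (kerB b) f.
have PuB : alpha0 * `|P u| <= Fk.
  have h1 := acoerK (P u) (PK u).
  have h2 := eq1 (P u); rewrite (PK u p) addr0 in h2.
  have h3 := aBl u (P u) (P u); rewrite -/w (Pperp u (P u) (PK u)) in h3.
  have h4 := dnorm_at fbound (PK u); rewrite -/Fk in h4.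
  have h5 := ler_norm (f (P u)).
  have := normr_ge0 (P u).
  move: h1 h2 h3 h4 h5; move: (`|P u|) (f (P u)) (`|f (P u)|) => x1 F1 AF h1 h2 h3 h4 h5 hx.
  have [->|xp] := eqVneq x1 0; first by rewrite mulr0.
  have xp' : 0 < x1 by rewrite lt_neqAle eq_sym xp hx.
  have : alpha0 * x1 * x1 <= Fk * x1 by rewrite -mulrA -expr2; lra.
  by rewrite ler_pM2r.
have a00 : 0 < alpha0 by lra.
have fpbound v : `|f (v - P v)| <= (Cf * sq) * `|v|.
  apply: (le_trans (fbound _)); rewrite -mulrA ler_wpM2l //; exact: Pnorm'.
set Fp := dnorm setT (fun v => f (v - P v)).
have Fp0 : 0 <= Fp := dnorm_ge0 setT fpbound.
have fpF v : `|f (v - P v)| <= Fp * `|v| := dnorm_at fpbound (I : setT v).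
have awB v : `|a w v| <= na * G / beta * `|v|.
  have h1 := aCS w v; rewrite -/X in h1.
  have h2 := aselfle v.
  have h3 : X <= na * G ^+ 2 / beta ^+ 2 by rewrite ler_pdivlMr ?exprn_gt0.
  have h4 : a w v ^+ 2 <= (na * G / beta * `|v|) ^+ 2.
    apply: (le_trans h1).
    have -> : (na * G / beta * `|v|) ^+ 2 = (na * G ^+ 2 / beta ^+ 2) * (na * `|v| ^+ 2).
      by rewrite !exprMn exprVn; field; rewrite ?gt_eqF.
    apply: le_trans (_ : X * (na * `|v| ^+ 2) <= _).
      by rewrite ler_wpM2l.
    by rewrite ler_wpM2r // mulr_ge0 // sqr_ge0.
  have : 0 <= na * G / beta * `|v| by rewrite !mulr_ge0 // invr_ge0 ltW.
  rewrite -[a w v ^+ 2]real_normK ?num_real // in h4.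
  move: h4; move: (`|a w v|) (normr_ge0 (a w v)) (na * G / beta * `|v|) => x1 hx y h hy; nra.
have bvp v : b v p = f (v - P v) - a w v.
  have e1 := eq1 v; have e2 := eq1 (P v); rewrite (PK v p) addr0 in e2.
  have e3 := aBl u (P u) (P v); rewrite -/w (Pperp u (P v) (PK v)) in e3.
  have e4 := aBl u (P u) v; rewrite -/w in e4.
  have e5 := Porth v u; rewrite aBr in e5.
  have e6 := fB v (P v).
  lra.
split.
- have -> : u = P u + w by rewrite /w addrC subrK.
  apply: (le_trans (ler_normD _ _)); apply: lerD.
    by rewrite mulrC ler_pdivlMr // mulrC.
  have : 0 <= beta^-1 * sq * G by rewrite !mulr_ge0 // invr_ge0 ltW.
  move: wB; move: (`|w|) (normr_ge0 w) (beta^-1 * sq * G) => x1 hx y hw hy; nra.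

- have [->|p0] := eqVneq p 0.
    rewrite normr0 addr_ge0 //; first by rewrite mulr_ge0 // invr_ge0 ltW.
    by rewrite mulr_ge0 // divr_ge0 // sqr_ge0.
  have hk : 0 <= Fp + na * G / beta by rewrite addr_ge0 // !mulr_ge0 // invr_ge0 ltW.
  have := @infsup_use R V Q b beta (Fp + na * G / beta) p p0 hk _ (infsup p p0).
  have H : forall v : V, v != 0 -> b v p <= (Fp + na * G / beta) * `|v|.
    move=> v _; rewrite bvp mulrDl.
    apply: le_trans (ler_norm _) _; apply: le_trans (ler_normB _ _) _.
    by apply: lerD; [apply: fpF | apply: awB].
  move=> /(_ H) h.
  rewrite -(ler_pM2l b0).
  have -> : beta * (beta^-1 * Fp + na / beta ^+ 2 * G) = Fp + na * G / beta.
    by field; rewrite gt_eqF.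
  exact: h.
- rewrite lerD2r -mulrA; apply: ler_wpM2l; first by rewrite invr_ge0 ltW.
  rewrite /Fp; apply: dnorm_le; first by rewrite mulr_ge0 // (dnorm_ge0 _ fbound).
  move=> v _ _.
  have hp : a_perp a (kerB b) (v - P v) by move=> k Kk; apply: Pperp.
  apply: (le_trans (dnorm_at fbound hp)).
  rewrite [sq * _]mulrC -mulrA; apply: ler_wpM2l; first exact: (dnorm_ge0 _ fbound).
  exact: Pnorm'.
Qed.
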